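(* Let $a,b,c,d,e,f\in[0,1]$ and $t_j,t_k,t_h\in(0,1)$. With $A_i,B_i,C_i$ as defined below, if $A_i=d^2+e^2+f^2+2def-1>0$, then $\Delta_i:=B_i^2-4A_iC_i>0$.
   Context: $Q_3=2abef+2acdf+2bcde+2abd+2ace+2bcf+2def+a^2+b^2+c^2+d^2+e^2+f^2-a^2f^2-b^2e^2-c^2d^2-1$; $A_i=d^2+e^2+f^2+2def-1$; $B_i=-\big[2t_j((1-f^2)a+bd+ce+bef+cdf)+2t_k((1-e^2)b+ad+cf+aef+cde)+2t_h((1-d^2)c+ae+bf+adf+bde)\big]$; $C_i=-\big[t_j^2(1-b^2-c^2-f^2-2bcf)+t_k^2(1-a^2-c^2-e^2-2ace)+t_h^2(1-a^2-b^2-d^2-2abd)+2t_jt_k((1-c^2)d+ab+ef+acf+bce)+2t_jt_h((1-b^2)e+ac+df+abf+bcd)+2t_kt_h((1-a^2)f+bc+de+abe+acd)+Q_3\big]$. In the paper, $a,\dots,f$ are $\cos\Phi_{ij},\cos\Phi_{ik},\cos\Phi_{ih},\cos\Phi_{jk},\cos\Phi_{jh},\cos\Phi_{kh}$ for weights $\Phi\in[0,\frac\pi2]$ on a truncated tetrahedron $\{ijkh\}$, $t_\nu=\tanh r_\nu$, and $A_it_i^2+B_it_i+C_i=-Q_2$, where $Q_2>0$ characterizes non-degeneracy of the tetrahedron. *)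

(* Defs.v *)
From Stdlib Require Import Reals.
Open Scope R_scope.

Definition Q3 (a b c d e f : R) : R :=
  2*a*b*e*f + 2*a*c*d*f + 2*b*c*d*e + 2*a*b*d + 2*a*c*e + 2*b*c*f + 2*d*e*f
  + a^2 + b^2 + c^2 + d^2 + e^2 + f^2 - a^2*f^2 - b^2*e^2 - c^2*d^2 - 1.

Definition Ai (a b c d e f : R) : R := d^2 + e^2 + f^2 + 2*d*e*f - 1.

Definition Bi (a b c d e f tj tk th : R) : R :=
  - (2*tj*((1 - f^2)*a + b*d + c*e + b*e*f + c*d*f)
     + 2*tk*((1 - e^2)*b + a*d + c*f + a*e*f + c*d*e)
     + 2*th*((1 - d^2)*c + a*e + b*f + a*d*f + b*d*e)).

Definition Ci (a b c d e f tj tk th : R) : R :=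
  - (tj^2*(1 - b^2 - c^2 - f^2 - 2*b*c*f)
     + tk^2*(1 - a^2 - c^2 - e^2 - 2*a*c*e)
     + th^2*(1 - a^2 - b^2 - d^2 - 2*a*b*d)
     + 2*tj*tk*((1 - c^2)*d + a*b + e*f + a*c*f + b*c*e)
     + 2*tj*th*((1 - b^2)*e + a*c + d*f + a*b*f + b*c*d)
     + 2*tk*th*((1 - a^2)*f + b*c + d*e + a*b*e + a*c*d)
     + Q3 a b c d e f).

Definition Delta_i (a b c d e f tj tk th : R) : R :=
  (Bi a b c d e f tj tk th)^2 - 4 * Ai a b c d e f * Ci a b c d e f tj tk th.

(* Main.v *)
Require Import Defs.
From Stdlib Require Import Reals Lra Psatz.
Open Scope R_scope.

Lemma qf_nonneg (d e f x y z : R) :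
  0 <= d <= 1 -> 0 <= e <= 1 -> 0 <= f <= 1 ->
  0 <= x -> 0 <= y -> 0 <= z ->
  0 <= (1-f^2)*x^2 + (1-e^2)*y^2 + (1-d^2)*z^2
       + 2*(d+e*f)*x*y + 2*(e+d*f)*x*z + 2*(f+d*e)*y*z.
Proof.
  intros Hd He Hf Hx Hy Hz.
  assert (0 <= 1 - f^2) by nra.
  assert (0 <= 1 - e^2) by nra.
  assert (0 <= 1 - d^2) by nra.
  assert (0 <= (1-f^2)*x^2) by (apply Rmult_le_pos; nra).
  assert (0 <= (1-e^2)*y^2) by (apply Rmult_le_pos; nra).
  assert (0 <= (1-d^2)*z^2) by (apply Rmult_le_pos; nra).
  assert (0 <= (d+e*f)*(x*y)) by (apply Rmult_le_pos; nra).
  assert (0 <= (e+d*f)*(x*z)) by (apply Rmult_le_pos; nra).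
  assert (0 <= (f+d*e)*(y*z)) by (apply Rmult_le_pos; nra).
  nra.
Qed.

Theorem lemma2p4 (a b c d e f tj tk th : R) :
  0 <= a <= 1 -> 0 <= b <= 1 -> 0 <= c <= 1 ->
  0 <= d <= 1 -> 0 <= e <= 1 -> 0 <= f <= 1 ->
  0 < tj < 1 -> 0 < tk < 1 -> 0 < th < 1 ->
  Ai a b c d e f > 0 ->
  Delta_i a b c d e f tj tk th > 0.
Proof.
  intros Ha Hb Hc Hd He Hf Hj Hk Hh HA.
  set (A := Ai a b c d e f) in *.
  set (S1 := (1-f^2)*a^2 + (1-e^2)*b^2 + (1-d^2)*c^2
       + 2*(d+e*f)*a*b + 2*(e+d*f)*a*c + 2*(f+d*e)*b*c).
  set (S2 := (1-f^2)*tj^2 + (1-e^2)*tk^2 + (1-d^2)*th^2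
       + 2*(d+e*f)*tj*tk + 2*(e+d*f)*tj*th + 2*(f+d*e)*tk*th).
  assert (E : Delta_i a b c d e f tj tk th = 4 * (A + S1) * (S2 + A)).
  { unfold Delta_i, Bi, Ci, Q3, A, Ai, S1, S2. ring. }
  assert (H1 : 0 <= S1) by (apply qf_nonneg; lra).
  assert (H2 : 0 <= S2) by (apply qf_nonneg; lra).
  rewrite E.
  assert (0 < (A + S1) * (S2 + A)) by (apply Rmult_lt_0_compat; lra).
  lra.
Qed.
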